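(* Let $G$ be a topological group acting continuously by linear isometries on a Banach space $X$. Suppose that $X$ admits an equivalent strictly convex norm $|\cdot|$. Define $\|x\|':=\sup_{g\in G}|gx|$ for $x\in X$. If this supremum is attained for every $x\in X$, then $\|\cdot\|'$ is a $G$-invariant strictly convex norm on $X$.
   Context: A norm is strictly convex if for every $x\neq y$ with $\|x\|=\|y\|$ one has $\|\frac{x+y}{2}\|<\|x\|$; it is $G$-invariant if $\|gx\|'=\|x\|'$ for all $g\in G$, $x\in X$. *)

(* Defs.v *)
From HB Require Import structures.
From mathcomp Require Import all_boot all_order all_algebra.
From mathcomp Require Import all_classical all_reals all_analysis.
Set Implicit Arguments. Unset Strict Implicit. Unset Printing Implicit Defensive.
Import Order.TTheory GRing.Theory Num.Theory.
Local Open Scope classical_set_scope.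
Local Open Scope ring_scope.

Definition is_topological_group (G : topologicalType)
    (mul : G -> G -> G) (inv : G -> G) (one : G) : Prop :=
  [/\ (forall a b c, mul a (mul b c) = mul (mul a b) c),
      (forall a, mul one a = a),
      (forall a, mul (inv a) a = one),
      continuous (fun p : G * G => mul p.1 p.2) &
      continuous inv].

Definition is_continuous_linear_isometric_action (R : realType)
    (G : topologicalType) (mul : G -> G -> G) (one : G)
    (X : normedModType R) (act : G -> X -> X) : Prop :=
  [/\ (forall x, act one x = x),
      (forall g h x, act (mul g h) x = act g (act h x)),
      (forall g (a : R) x y, act g (a *: x + y) = a *: act g x + act g y),
      (forall g x, `|act g x| = `|x|) &
      continuous (fun p : G * X => act p.1 p.2)].

Definition is_norm (R : realType) (X : normedModType R) (n : X -> R) : Prop :=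
  [/\ (forall x, 0 <= n x),
      (forall x, n x = 0 -> x = 0),
      (forall (a : R) x, n (a *: x) = `|a| * n x) &
      (forall x y, n (x + y) <= n x + n y)].

Definition equivalent_norm (R : realType) (X : normedModType R) (n : X -> R) : Prop :=
  is_norm n /\
  exists c C : R, [/\ 0 < c, 0 < C & forall x, c * `|x| <= n x <= C * `|x|].

Definition strictly_convex (R : realType) (X : normedModType R) (n : X -> R) : Prop :=
  forall x y : X, x <> y -> n x = n y -> n (2^-1 *: (x + y)) < n x.

Definition G_invariant (R : realType) (G : Type) (X : normedModType R)
    (act : G -> X -> X) (n : X -> R) : Prop :=
  forall g x, n (act g x) = n x.

Definition sup_orbit_norm (R : realType) (G : Type) (X : normedModType R)
    (act : G -> X -> X) (n : X -> R) : X -> R :=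
  fun x => sup (range (fun g => n (act g x))).

(* Main.v *)
Require Import Defs.
From HB Require Import structures.
From mathcomp Require Import all_boot all_order all_algebra.
From mathcomp Require Import all_classical all_reals all_analysis.
From mathcomp Require Import lra.
Import Order.TTheory GRing.Theory Num.Theory.
Local Open Scope classical_set_scope.
Local Open Scope ring_scope.

Theorem proposition4p3 (R : realType) (G : topologicalType)
  (mul : G -> G -> G) (inv : G -> G) (one : G)
  (X : completeNormedModType R) (act : G -> X -> X) (n : X -> R) :
  is_topological_group mul inv one ->
  is_continuous_linear_isometric_action mul one act ->
  equivalent_norm n ->
  strictly_convex n ->
  (forall x : X, exists g0 : G, n (act g0 x) = sup_orbit_norm act n x) ->
  [/\ is_norm (sup_orbit_norm act n),
      G_invariant act (sup_orbit_norm act n) &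
      strictly_convex (sup_orbit_norm act n)].
Proof.
move=> [_ _ mulV _ _] [act1 actM actL actN _] [[n0 n0eq nZ nD] [c [C [c0 C0 nb]]]] sc att.
set N := sup_orbit_norm act n.
have {}att x : exists g0, n (act g0 x) = N x := att x.
have act0 g : act g 0 = 0.
  by apply: normr0_eq0; rewrite actN normr0.
have actZ g (a : R) x : act g (a *: x) = a *: act g x.
  by rewrite -[a *: x]addr0 actL act0 addr0.
have actD g x y : act g (x + y) = act g x + act g y.
  by rewrite -[x]scale1r actL !scale1r.
have ub g x : n (act g x) <= N x.
  apply: (sup_upper_bound (E := range (fun g => n (act g x)))); last by exists g.
  split; first by exists (n (act one x)), one.
  exists (C * `|x|) => _ [h _ <-].
  by have /andP[_ +] := nb (act h x); rewrite actN.
have nN x : n x <= N x by rewrite -{1}(act1 x); exact: ub.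
split.
- split.
  + by move=> x; apply: le_trans (nN x).
  + move=> x Nx0; apply: n0eq; apply/eqP; rewrite eq_le n0 andbT -Nx0; exact: nN.
  + move=> a x; apply/eqP; rewrite eq_le; apply/andP; split.
      have [g0 <-] := att (a *: x); rewrite actZ nZ.
      by apply: ler_wpM2l => //; exact: ub.
    have [g0 <-] := att x; rewrite -nZ -actZ; exact: ub.
  + move=> x y; have [g0 <-] := att (x + y); rewrite actD.
    by apply: le_trans (nD _ _) _; apply: lerD; apply: ub.
- move=> h x; apply/eqP; rewrite eq_le; apply/andP; split.
    have [g0 <-] := att (act h x); rewrite -actM; exact: ub.
  have [g0 <-] := att x.
  have -> : act g0 x = act (mul g0 (inv h)) (act h x).
    by rewrite actM -(actM (inv h)) mulV act1.
  exact: ub.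
- move=> x y xy Nxy.
  have [g0 <-] := att (2^-1 *: (x + y)).
  rewrite actZ actD.
  set a := act g0 x; set b := act g0 y.
  have ab : a <> b.
    move=> eab; apply: xy.
    by rewrite -(act1 x) -(act1 y) -(mulV g0) !actM -/a eab.
  have ua : n a <= N x by exact: ub.
  have ubb : n b <= N x by rewrite Nxy; exact: ub.
  have [nab|nab] := eqVneq (n a) (n b).
    by apply: lt_le_trans (sc _ _ ab nab) ua.
  rewrite nZ.
  have h2 : `|2^-1 : R| = 2^-1 by rewrite ger0_norm.
  rewrite h2.
  have nabs := nD a b.
  have : n a < N x \/ n b < N x.
    case: (ltP (n a) (N x)) => [|hb]; first by left.
    right; have ea : n a = N x by apply/eqP; rewrite eq_le ua hb.
    by rewrite lt_neqAle ubb andbT -ea eq_sym.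
  move: nabs ua ubb; move: (n (a + b)) (n a) (n b) (N x) => p q r s.
  move=> k1 k2 k3 [k4|k4]; lra.
Qed.
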